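(* Let $V$ be a real vector space and $C$ a convex cone in $V$ with $0\in C$. Suppose $X$ and $Y$ are disjoint $C$-antichain-convex subsets of $V$. (1) If $X$ is $C$-upward, then $\operatorname{co}(X)\cap\operatorname{co}(Y)=\emptyset$. (2) If $X$ is $C$-downward, then $\operatorname{co}(X)\cap\operatorname{co}(Y)=\emptyset$.
   Context: A cone in $V$ is a subset $C$ with $\lambda C\subseteq C$ for all $\lambda>0$. $S\subseteq V$ is $C$-antichain-convex iff for all $x,y\in S$ and $\lambda\in[0,1]$ with $y-x\notin C\cup(-C)$ one has $\lambda x+(1-\lambda)y\in S$. $S$ is $C$-upward iff $S+C\subseteq S$; $C$-downward iff $S-C\subseteq S$. $\operatorname{co}$ denotes convex hull. *)

(* Defs.v *)
From HB Require Import structures.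
From mathcomp Require Import all_boot all_order all_algebra.
From mathcomp Require Import reals.
Set Implicit Arguments. Unset Strict Implicit. Unset Printing Implicit Defensive.
Import Order.TTheory GRing.Theory Num.Theory.
Local Open Scope ring_scope.

Section Defs.
Variables (R : realType) (V : lmodType R).

Definition is_cone (C : V -> Prop) : Prop :=
  forall (l : R) (x : V), 0 < l -> C x -> C (l *: x).

Definition is_convex (S : V -> Prop) : Prop :=
  forall (x y : V) (l : R), S x -> S y -> 0 <= l -> l <= 1 ->
    S (l *: x + (1 - l) *: y).

Definition antichain_convex (C S : V -> Prop) : Prop :=
  forall (x y : V) (l : R), S x -> S y -> 0 <= l -> l <= 1 ->
    ~ (C (y - x) \/ C (- (y - x))) ->
    S (l *: x + (1 - l) *: y).

Definition upward (C S : V -> Prop) : Prop :=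
  forall x c : V, S x -> C c -> S (x + c).

Definition downward (C S : V -> Prop) : Prop :=
  forall x c : V, S x -> C c -> S (x - c).

Definition conv_hull (S : V -> Prop) : V -> Prop :=
  fun v => exists (n : nat) (w : 'I_n -> R) (p : 'I_n -> V),
    (forall i, 0 <= w i) /\ (\sum_(i < n) w i = 1) /\ (forall i, S (p i)) /\
    v = \sum_(i < n) w i *: p i.

End Defs.

(* Main.v *)
Require Import Defs.
From HB Require Import structures.
From mathcomp Require Import all_boot all_order all_algebra.
From mathcomp Require Import reals.
From Stdlib Require Import Classical.
Import Order.TTheory GRing.Theory Num.Theory.
Local Open Scope ring_scope.

Section Aux.
Variables (R : realType) (V : lmodType R) (C : V -> Prop).
Hypotheses (Ccone : is_cone C) (Cconv : is_convex C) (C0 : C 0).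

Lemma Cscale l x : 0 <= l -> C x -> C (l *: x).
Proof.
rewrite le0r => /orP[/eqP->|lt] Cx; first by rewrite scale0r.
exact: Ccone.
Qed.

Lemma Cadd a b : C a -> C b -> C (a + b).
Proof.
move=> Ca Cb.
have h : C ((2:R)^-1 *: a + (1 - (2:R)^-1) *: b).
  apply: Cconv => //; first by rewrite invr_ge0.
  by rewrite invf_le1 // ler1n.
have -> : a + b = 2 *: ((2:R)^-1 *: a + (1 - (2:R)^-1) *: b).
  have e : 1 - (2:R)^-1 = (2:R)^-1.
    by rewrite {1}(splitr 1) mul1r addrK.
  by rewrite e -scalerDr scalerA divff ?scale1r // pnatr_eq0.
by apply: Cscale => //; rewrite ler0n.
Qed.

Lemma hull_above (S : V -> Prop) : antichain_convex C S ->
  forall n (w : 'I_n -> R) (p : 'I_n -> V), (forall i, 0 <= w i) ->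
  (forall i, S (p i)) ->
  (\sum_(i < n) w i = 0 /\ \sum_(i < n) w i *: p i = 0) \/
  exists y, S y /\ C ((\sum_(i < n) w i) *: y - \sum_(i < n) w i *: p i).
Proof.
move=> Sac; elim=> [|n IH] w p w0 Sp.
  by left; rewrite !big_ord0.
right; rewrite !big_ord_recl.
have := IH (fun i => w (lift ord0 i)) (fun i => p (lift ord0 i)) (fun i => w0 _) (fun i => Sp _).
set r := \sum_(i < n) _; set vr := \sum_(i < n) _.
have r0 : 0 <= r by apply: sumr_ge0.
have ww := w0 ord0.
case=> [[-> ->]|[y' [Sy' Cy]]].
  by exists (p ord0); split => //; rewrite addr0 addr0 subrr.
have [Cyp|nCyp] := classic (C (y' - p ord0)).
  exists y'; split => //.
  have -> : (w ord0 + r) *: y' - (w ord0 *: p ord0 + vr) =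
            w ord0 *: (y' - p ord0) + (r *: y' - vr).
    rewrite scalerDl scalerBr opprD; rewrite !addrA; congr (_ - _).
    by rewrite addrAC -!addrA; congr (_ + _); rewrite addrC.
  by apply: Cadd => //; apply: Cscale.
have [Cpy|nCpy] := classic (C (- (y' - p ord0))).
  exists (p ord0); split => //.
  have -> : (w ord0 + r) *: p ord0 - (w ord0 *: p ord0 + vr) =
            r *: (- (y' - p ord0)) + (r *: y' - vr).
    rewrite scalerDl opprD addrA (addrC (w ord0 *: p ord0)) addrK scalerN scalerBr opprB.
    by rewrite addrA addrNK.
  by apply: Cadd => //; apply: Cscale.
have [w00|w0n] := eqVneq (w ord0) 0.
  by exists y'; split => //; rewrite w00 add0r scale0r add0r.
have sp : 0 < w ord0 + r by rewrite ltr_wpDr // lt0r w0n.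
set s := w ord0 + r in sp *.
have sn : s != 0 by rewrite gt_eqF.
pose l := w ord0 / s.
have l0 : 0 <= l by rewrite divr_ge0 // ltW.
have l1 : l <= 1 by rewrite ler_pdivrMr // mul1r /s lerDl.
exists (l *: p ord0 + (1 - l) *: y'); split.
  apply: Sac => //; by move=> [h|h]; [apply: nCyp|apply: nCpy].
have e1 : s * l = w ord0 by rewrite /l mulrC mulfVK.
have e2 : s * (1 - l) = r by rewrite mulrBr mulr1 e1 /s addrAC subrr add0r.
rewrite scalerDr !scalerA e1 e2 (addrC (w ord0 *: p ord0)) addrKA.
by [].
Qed.

End Aux.

Theorem lemma7 (R : realType) (V : lmodType R) (C X Y : V -> Prop) :
  is_cone C -> is_convex C -> C 0 ->
  (forall v, ~ (X v /\ Y v)) ->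
  antichain_convex C X -> antichain_convex C Y ->
  (upward C X -> forall v, ~ (conv_hull X v /\ conv_hull Y v)) /\
  (downward C X -> forall v, ~ (conv_hull X v /\ conv_hull Y v)).
Proof.
move=> Cc Cv C0 dis aX aY.
pose C' := fun z => C (- z).
have C'c : is_cone C' by move=> l x lp; rewrite /C' -scalerN; apply: Cc.
have C'v : is_convex C'.
  move=> x y l Cx Cy l0 l1; rewrite /C' opprD -!scalerN; exact: Cv.
have C'0 : C' 0 by rewrite /C' oppr0.
have ac' S : antichain_convex C S -> antichain_convex C' S.
  move=> aS x y l Sx Sy l0 l1 nc; apply: aS => // -[h|h]; apply: nc.
    by right; rewrite /C' opprK.
  by left.
have above S v : antichain_convex C S -> conv_hull S v ->
    (exists y, S y /\ C (y - v)) /\ (exists y, S y /\ C (v - y)).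
  move=> aS [n [w [p [w0 [w1 [Sp ->]]]]]]; split.
    case: (@hull_above _ _ _ Cc Cv C0 _ aS _ _ _ w0 Sp); rewrite w1.
      by move=> [/eqP]; rewrite oner_eq0.
    by move=> [y [Sy Cy]]; exists y; rewrite scale1r in Cy.
  case: (@hull_above _ _ _ C'c C'v C'0 _ (ac' _ aS) _ _ _ w0 Sp); rewrite w1.
    by move=> [/eqP]; rewrite oner_eq0.
  by move=> [y [Sy Cy]]; exists y; move: Cy; rewrite /C' scale1r opprB.
split.
  move=> up v [hX hY].
  have [[x1 [Xx1 _]] [x2 [Xx2 Cx2]]] := above _ _ aX hX.
  have [[y1 [Yy1 Cy1]] _] := above _ _ aY hY.
  apply: (dis y1); split => //.
  have := up _ _ Xx2 (@Cadd _ _ _ Cc Cv C0 _ _ Cy1 Cx2).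
  have e : x2 + (y1 - v + (v - x2)) = y1 by rewrite subrKA addrC addrNK.
  by rewrite e.
move=> dn v [hX hY].
have [[x1 [Xx1 Cx1]] _] := above _ _ aX hX.
have [_ [y2 [Yy2 Cy2]]] := above _ _ aY hY.
apply: (dis y2); split => //.
have := dn _ _ Xx1 (@Cadd _ _ _ Cc Cv C0 _ _ Cx1 Cy2).
by rewrite [x1 - v + _]addrA addrNK opprB addrC addrNK.
Qed.
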